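(* Let $q\in(0,1)$, let $\lambda,\mu\in\mathbb C$ with $\lambda\ne q$, and let $t\in\mathbb{Z}_{\ge0}$. Then, as an identity of rational functions of $w_1,\dots,w_t$, $$\frac{q-\lambda q^t}{q-\lambda}+\sum_{i=0}^{t-1}T_{\sigma^-_{[1,i+1]}}\frac{(q-1)(\lambda-q\mu w_1)}{(q-\lambda)(1-\mu w_1)}=\prod_{i=1}^t\frac{1-q\mu w_i}{1-\mu w_i}.$$
   Context: $\sigma_i$ is the transposition of $i,i+1$; $\sigma^-_{[1,b]}=\sigma_{b-1}\sigma_{b-2}\cdots\sigma_1$ ($=\mathrm{id}$ for $b=1$). Operators on rational functions: $t_i$ swaps $w_i,w_{i+1}$; $T_i=q+\frac{w_{i+1}-qw_i}{w_{i+1}-w_i}(t_i-1)$; $T_{\sigma^-_{[1,b]}}=T_{b-1}T_{b-2}\cdots T_1$ (identity for $b=1$). *)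

(* Defs.v *)
From mathcomp Require Import all_boot all_order all_algebra.
From mathcomp Require Import complex.
From mathcomp Require Import reals.
Set Implicit Arguments. Unset Strict Implicit. Unset Printing Implicit Defensive.
Import Order.TTheory GRing.Theory Num.Theory.
Local Open Scope ring_scope.
Local Open Scope complex_scope.

Section Ops.
Variable R : realType.
Notation C := (R[i]).

(* A point (w_1, w_2, ...) ; only the coordinates w_1..w_t matter. *)
Definition swapw (i : nat) (w : nat -> C) : nat -> C :=
  fun k => if k == i then w i.+1 else if k == i.+1 then w i else w k.

Definition t_op (i : nat) (f : (nat -> C) -> C) : (nat -> C) -> C :=
  fun w => f (swapw i w).

Definition T_op (q : C) (i : nat) (f : (nat -> C) -> C) : (nat -> C) -> C :=
  fun w => q * f w +
    (w i.+1 - q * w i) / (w i.+1 - w i) * (t_op i f w - f w).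

(* T_{sigma^-_{[1,b]}} = T_{b-1} T_{b-2} ... T_1 (identity for b = 1) *)
Fixpoint T_down (q : C) (b : nat) (f : (nat -> C) -> C) : (nat -> C) -> C :=
  match b with
  | 0 => f
  | 1 => f
  | b'.+1 => T_op q b' (T_down q b' f)
  end.
End Ops.

(* Main.v *)
Require Import Defs.
From mathcomp Require Import all_boot all_order all_algebra.
From mathcomp Require Import complex.
From mathcomp Require Import reals.
From mathcomp Require Import ring zify.
Import Order.TTheory GRing.Theory Num.Theory.
Set Implicit Arguments.
Local Open Scope ring_scope.
Local Open Scope complex_scope.

Section Aux.
Variable R : realType.
Notation C := (R[i]).
Variables (q lam mu : C) (t : nat).
Hypothesis hlam : q - lam != 0.

Definition hh (x : C) := (1 - q * mu * x) / (1 - mu * x).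
Definition FF n (v : nat -> C) := \prod_(1 <= i < n.+1) hh (v i).
Definition GG b v := FF b v - FF b.-1 v - lam * q ^+ b.-1 * (1 - q) / (q - lam).
Definition ff := (fun v : nat -> C => (q - 1) * (lam - q * mu * v 1%N) /
                 ((q - lam) * (1 - mu * v 1%N))).

Definition cond (v : nat -> C) :=
  (forall i j : nat, (1 <= i <= t)%N -> (1 <= j <= t)%N -> i != j -> v i != v j)
  /\ (forall i : nat, (1 <= i <= t)%N -> mu * v i != 1).

Definition sw b i : nat := if i == b then b.+1 else if i == b.+1 then b else i.

Lemma swapwE b (v : nat -> C) i : swapw b v i = v (sw b i).
Proof. by rewrite /swapw /sw; case: (i == b); case: (i == b.+1). Qed.

Lemma cond_sw b (v : nat -> C) : (1 <= b < t)%N -> cond v -> cond (swapw b v).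
Proof.
move=> hb [h1 h2]; split.
- move=> i j hi hj hij; rewrite !swapwE; apply: h1;
  rewrite /sw; repeat case: eqP; move=> *; lia.
- move=> i hi; rewrite swapwE; apply: h2; rewrite /sw; repeat case: eqP; move=> *; lia.
Qed.

Lemma FF_rec n v : (1 <= n)%N -> FF n v = FF n.-1 v * hh (v n).
Proof. by move=> hn; rewrite /FF prednK // big_nat_recr. Qed.

Lemma FF_sw b (v : nat -> C) k : (k < b)%N -> FF k (swapw b v) = FF k v.
Proof.
move=> hk; apply: eq_big_nat => i /andP [_ hi]; rewrite swapwE /sw.
by do 2 (case: eqP => [?|_]; first lia).
Qed.

Lemma Tdown_eq b : (1 <= b <= t)%N -> forall v, cond v -> T_down q b ff v = GG b v.
Proof.
elim: b => [//|b IH] hb v cv.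
case: b IH hb => [_ hb|b IH hb].
  have h1 : 1 - mu * v 1%N != 0.
    by rewrite subr_eq0 eq_sym; apply: cv.2; lia.
  rewrite /= /ff /GG /FF big_nat1 /hh expr0.
  rewrite big_geq //.
  by field; rewrite h1 hlam.
change (T_op q b.+1 (T_down q b.+1 ff) v = GG b.+2 v).
rewrite /T_op /t_op.
rewrite IH //; last lia.
rewrite IH; last (by apply: cond_sw => //; lia); last lia.
rewrite /GG /= (FF_rec b.+1 (swapw _ _)) // /= FF_sw // (FF_rec b.+2) // /= (FF_rec b.+1 v) // /= swapwE /sw eqxx.
have h1 : 1 - mu * v b.+1 != 0 by rewrite subr_eq0 eq_sym; apply: cv.2; lia.
have h2 : 1 - mu * v b.+2 != 0 by rewrite subr_eq0 eq_sym; apply: cv.2; lia.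
have h3 : v b.+2 - v b.+1 != 0 by rewrite subr_eq0; apply: cv.1; lia.
rewrite /hh exprS.
by field; rewrite h1 h2 h3 hlam.
Qed.
End Aux.

Lemma sumGG (R : realType) (q lam mu : R[i]) (w : nat -> R[i]) n :
  q - lam != 0 ->
  (forall i : nat, (1 <= i <= n)%N -> mu * w i != 1) ->
  (q - lam * q ^+ n) / (q - lam) + \sum_(0 <= i < n) @GG R q lam mu i.+1 w
  = @FF R q mu n w.
Proof.
move=> hl; elim: n => [|n IH] hd.
  rewrite big_geq // /FF big_geq // expr0 mulr1 addr0; by field.
rewrite big_nat_recr //= (@FF_rec R q mu n.+1 w) //=.
have h1 : 1 - mu * w n.+1 != 0 by rewrite subr_eq0 eq_sym; apply: hd; lia.
have e := IH (fun i hi => hd i ltac:(lia)).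
rewrite /GG /= (@FF_rec R q mu n.+1 w) //= /hh exprS.
set S := \sum_(0 <= i < n) _.
set P := @FF R q mu n w.
have -> : S = P - (q - lam * q ^+ n) / (q - lam) by rewrite /P -e /S; ring.
by field; rewrite h1 hl.
Qed.

Theorem lemma6p2 (R : realType) (q : R) (lam mu : R[i]) (t : nat)
  (hq : 0 < q < 1) (hlam : lam != q%:C)
  (w : nat -> R[i])
  (hdist : forall i j : nat, (1 <= i <= t)%N -> (1 <= j <= t)%N -> i != j ->
             w i != w j)
  (hden : forall i : nat, (1 <= i <= t)%N -> mu * w i != 1) :
  (q%:C - lam * q%:C ^+ t) / (q%:C - lam) +
  \sum_(0 <= i < t)
     T_down q%:C i.+1
       (fun v => (q%:C - 1) * (lam - q%:C * mu * v 1%N) /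
                 ((q%:C - lam) * (1 - mu * v 1%N))) w
  = \prod_(1 <= i < t.+1) ((1 - q%:C * mu * w i) / (1 - mu * w i)).
Proof.
have hl : q%:C - lam != 0 by rewrite subr_eq0 eq_sym.
have -> : \sum_(0 <= i < t)
     T_down q%:C i.+1
       (fun v => (q%:C - 1) * (lam - q%:C * mu * v 1%N) /
                 ((q%:C - lam) * (1 - mu * v 1%N))) w
   = \sum_(0 <= i < t) @GG R q%:C lam mu i.+1 w.
  apply: eq_big_nat => i /andP [_ hi].
  apply: (@Tdown_eq R q%:C lam mu t hl); [lia | by split].
exact: (@sumGG R q%:C lam mu w t hl hden).
Qed.
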